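(* Let $\varepsilon\in(0,1)$ and let $\mu,\lambda$ be positive integers with $\lambda\le(1-\varepsilon)e\mu$. Consider the $(\mu,\lambda)$ EA on OneMax with populations $P_0,P_1,\dots$, and let $g$ be the potential defined in the context. Then, for $n$ sufficiently large, for all $t\ge0$, \[E[g(P_{t+1})\mid P_t]\le g(P_t)+2\lambda.\]
   Context: $f$ is OneMax, $f(x)=\sum_i x_i$. The $(\mu,\lambda)$ EA: $P_0$ consists of $\mu$ independent uniformly random points of $\{0,1\}^n$; in each generation $\lambda$ offspring are created independently, each by choosing a parent uniformly at random from $P_t$ and flipping each bit of a copy independently with probability $1/n$; $P_{t+1}$ consists of the $\mu$ offspring with largest $f$-values (ties broken randomly). Potential: $\tau=\frac{4e}{\varepsilon}$, $\alpha=1-\frac1\tau\ln\big(1+\frac1\tau\big)$, $f_0=\lceil\alpha n\rceil$, $g(x)=\tau^{f(x)-f_0}$ if $f(x)\ge f_0$ and $g(x)=0$ otherwise; for a population (multiset) $P$, $g(P)=\sum_{x\in P}g(x)$. *)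

(* Defs.v *)
From Stdlib Require Import Reals Lra Lia ZArith List.
Import ListNotations.
Open Scope R_scope.

Fixpoint bitstrings (n : nat) : list (list bool) :=
  match n with
  | O => [[]]
  | S k => map (cons false) (bitstrings k) ++ map (cons true) (bitstrings k)
  end.

Fixpoint onemax (x : list bool) : nat :=
  match x with
  | [] => O
  | b :: x' => ((if b then 1 else 0) + onemax x')%nat
  end.

Fixpoint flip (x m : list bool) : list bool :=
  match x, m with
  | b :: x', c :: m' => xorb b c :: flip x' m'
  | _, _ => x
  end.

(** Probability that standard bit mutation (rate 1/n) flips exactly the mask m. *)
Definition mask_prob (n : nat) (m : list bool) : R :=
  (/ INR n) ^ (onemax m) * (1 - / INR n) ^ (n - onemax m).

(** Distribution (list of weight/outcome pairs) of one offspring: parent chosen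
    uniformly at random from the population P (a multiset given as a list),
    then standard bit mutation. *)
Definition offspring_dist (n : nat) (P : list (list bool)) : list (R * list bool) :=
  flat_map (fun x => map (fun m => (/ INR (length P) * mask_prob n m, flip x m))
                         (bitstrings n)) P.

(** Expectation of F over k independent draws from the finite distribution d. *)
Fixpoint expect_iid {A : Type} (d : list (R * A)) (k : nat) (F : list A -> R) : R :=
  match k with
  | O => F []
  | S k' => fold_right (fun wa acc => fst wa * expect_iid d k' (fun l => F (snd wa :: l)) + acc) 0 d
  end.

Fixpoint insert_desc (x : list bool) (l : list (list bool)) : list (list bool) :=
  match l with
  | [] => [x]
  | y :: l' => if Nat.leb (onemax y) (onemax x) then x :: l else y :: insert_desc x l'
  end.

Definition sort_desc (l : list (list bool)) : list (list bool) :=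
  fold_right insert_desc [] l.

(** Selection of the mu offspring with the largest fitness (ties broken by a
    fixed rule; the potential only depends on fitness values). *)
Definition select (mu : nat) (O : list (list bool)) : list (list bool) :=
  firstn mu (sort_desc O).

(** Ceiling of a real number: up y is the unique integer in (y, y+1]. *)
Definition Rceil (x : R) : Z := (1 - up (- x))%Z.

Definition tau (eps : R) : R := 4 * exp 1 / eps.
Definition alpha (eps : R) : R := 1 - / tau eps * ln (1 + / tau eps).
Definition f0 (eps : R) (n : nat) : Z := Rceil (alpha eps * INR n).

Definition g (eps : R) (n : nat) (x : list bool) : R :=
  if Z.leb (f0 eps n) (Z.of_nat (onemax x))
  then tau eps ^ Z.to_nat (Z.of_nat (onemax x) - f0 eps n)
  else 0.

Definition gpop (eps : R) (n : nat) (P : list (list bool)) : R :=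
  fold_right (fun x acc => g eps n x + acc) 0 P.

(* Main.v *)
Require Import Defs.
From Stdlib Require Import Reals List Lra Lia ZArith.
Import ListNotations.
Open Scope R_scope.

Definition sumR (l : list R) : R := fold_right Rplus 0 l.

Lemma sumR_app l1 l2 : sumR (l1 ++ l2) = sumR l1 + sumR l2.
Proof. induction l1; simpl; [ring| rewrite IHl1; ring]. Qed.

Lemma sumR_scal {A} c (h : A -> R) l : sumR (map (fun x => c * h x) l) = c * sumR (map h l).
Proof. induction l; simpl; [ring| rewrite IHl; ring]. Qed.

Lemma sumR_le {A} (h1 h2 : A -> R) l : (forall x, In x l -> h1 x <= h2 x) -> sumR (map h1 l) <= sumR (map h2 l).
Proof. induction l; simpl; intros H; [lra|]. apply Rplus_le_compat; auto. Qed.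

Definition Ed {A} (d : list (R * A)) (h : A -> R) : R :=
  fold_right (fun wa acc => fst wa * h (snd wa) + acc) 0 d.

Lemma Ed_le {A} (d : list (R*A)) h1 h2 : Forall (fun wa => 0 <= fst wa) d -> (forall a, h1 a <= h2 a) -> Ed d h1 <= Ed d h2.
Proof. induction d as [|[w a] d IH]; simpl; intros Hd H; [lra|]. inversion Hd; subst. simpl in *. apply Rplus_le_compat; auto. apply Rmult_le_compat_l; auto. Qed.

Lemma Ed_ext {A} (d : list (R*A)) h1 h2 : (forall a, h1 a = h2 a) -> Ed d h1 = Ed d h2.
Proof. induction d as [|[w a] d IH]; simpl; intros H; [lra|]. rewrite H, IH; auto. Qed.

Lemma Ed_affine {A} (d : list (R*A)) c h : Ed d (fun a => c + h a) = c * Ed d (fun _ => 1) + Ed d h.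
Proof. induction d as [|[w a] d IH]; simpl; [ring|]. rewrite IH; ring. Qed.

Lemma Ed_app {A} (d1 d2 : list (R*A)) h : Ed (d1 ++ d2) h = Ed d1 h + Ed d2 h.
Proof. induction d1 as [|[w a] d IH]; simpl; [ring|]. rewrite IH; ring. Qed.

Lemma Ed_flat_map {A B} (f : B -> list (R*A)) P h : Ed (flat_map f P) h = sumR (map (fun x => Ed (f x) h) P).
Proof. induction P; simpl; [reflexivity|]. rewrite Ed_app, IHP; reflexivity. Qed.

Lemma Ed_map {A B} (w : B -> R) (y : B -> A) l h : Ed (map (fun m => (w m, y m)) l) h = sumR (map (fun m => w m * h (y m)) l).
Proof. induction l; simpl; [reflexivity|]. rewrite IHl; reflexivity. Qed.

Lemma expect_step {A} (d : list (R*A)) k F : expect_iid d (S k) F = Ed d (fun a => expect_iid d k (fun l => F (a :: l))).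
Proof. reflexivity. Qed.

Lemma expect_ext {A} (d : list (R*A)) k : forall F G, (forall l, F l = G l) -> expect_iid d k F = expect_iid d k G.
Proof. induction k; intros F G H. simpl; apply H. rewrite !expect_step. apply Ed_ext. intro a. apply IHk. auto. Qed.

Lemma expect_le {A} (d : list (R*A)) k : Forall (fun wa => 0 <= fst wa) d -> forall F G, (forall l, F l <= G l) -> expect_iid d k F <= expect_iid d k G.
Proof. intros Hd. induction k; intros F G H. simpl; apply H. rewrite !expect_step. apply Ed_le; auto. Qed.

Lemma expect_gpop eps n (d : list (R*list bool)) : Ed d (fun _ => 1) = 1 -> forall k A, expect_iid d k (fun l => A + gpop eps n l) = A + INR k * Ed d (g eps n).
Proof. intros HW k; induction k; intros A.
 - simpl. ring.
 - rewrite expect_step. rewrite (Ed_ext _ _ (fun a => (A + INR k * Ed d (g eps n)) + g eps n a)).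
   + rewrite Ed_affine, HW, S_INR. ring.
   + intro a. rewrite (expect_ext _ _ _ (fun l => (A + g eps n a) + gpop eps n l)). rewrite IHk. ring.
     intro l. unfold gpop; simpl; ring.
Qed.

Lemma g_nonneg eps n x : 0 < eps -> 0 <= g eps n x.
Proof. intros He. unfold g. destruct (Z.leb _ _); [|lra]. apply pow_le. unfold tau.
  pose proof (exp_pos 1). left. apply Rmult_lt_0_compat; [lra| apply Rinv_0_lt_compat; lra]. Qed.

Lemma gpop_insert eps n x l : gpop eps n (insert_desc x l) = g eps n x + gpop eps n l.
Proof. induction l; simpl. unfold gpop; simpl; ring.
  destruct (Nat.leb _ _); unfold gpop in *; simpl in *; [ring|]. rewrite IHl; ring. Qed.

Lemma gpop_sort eps n l : gpop eps n (sort_desc l) = gpop eps n l.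
Proof. induction l; simpl. reflexivity. unfold sort_desc in *; simpl. rewrite gpop_insert, IHl. unfold gpop; simpl; ring. Qed.

Lemma gpop_cons eps n a l : gpop eps n (a :: l) = g eps n a + gpop eps n l.
Proof. reflexivity. Qed.

Lemma gpop_nonneg eps n l : 0 < eps -> 0 <= gpop eps n l.
Proof. intros He; induction l. unfold gpop; simpl; lra. rewrite gpop_cons. pose proof (g_nonneg eps n a He). lra. Qed.

Lemma gpop_firstn eps n k l : 0 < eps -> gpop eps n (firstn k l) <= gpop eps n l.
Proof. intros He. revert k; induction l; intros k; destruct k; simpl.
  - unfold gpop; simpl; lra.
  - unfold gpop; simpl; lra.
  - change (gpop eps n [] <= gpop eps n (a :: l)). pose proof (gpop_nonneg eps n (a :: l) He). replace (gpop eps n []) with 0 by reflexivity. lra.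
  - change (gpop eps n (a :: firstn k l) <= gpop eps n (a :: l)). rewrite !gpop_cons. specialize (IHl k). lra. Qed.

Lemma gpop_select eps n mu O : 0 < eps -> gpop eps n (select mu O) <= gpop eps n O.
Proof. intros He. unfold select. rewrite <- (gpop_sort eps n O). apply gpop_firstn; auto. Qed.
Lemma bitstrings_length k m : In m (bitstrings k) -> length m = k.
Proof. revert m; induction k; simpl; intros m H.
 destruct H as [<-|[]]; reflexivity.
 apply in_app_or in H; destruct H as [H|H]; apply in_map_iff in H; destruct H as [m' [<- Hm]]; simpl; f_equal; auto. Qed.

Lemma onemax_le x : (onemax x <= length x)%nat.
Proof. induction x as [|b x IH]; simpl; [lia| destruct b; lia]. Qed.

Lemma prod_formula (p q t : R) : forall x,
  sumR (map (fun m => p ^ onemax m * q ^ (length x - onemax m) * t ^ onemax (flip x m)) (bitstrings (length x)))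
  = (q * t + p) ^ onemax x * (q + p * t) ^ (length x - onemax x).
Proof.
  induction x as [|b x IH].
  - simpl. ring.
  - simpl length. simpl bitstrings. rewrite map_app, sumR_app, !map_map.
    match goal with |- sumR (map ?f1 ?B) + sumR (map ?f2 ?B) = _ =>
      rewrite (map_ext_in f1 (fun m => (q * (if b then t else 1)) * (p ^ onemax m * q ^ (length x - onemax m) * t ^ onemax (flip x m)))),
              (map_ext_in f2 (fun m => (p * (if b then 1 else t)) * (p ^ onemax m * q ^ (length x - onemax m) * t ^ onemax (flip x m)))) end.
    + rewrite !sumR_scal, IH. pose proof (onemax_le x). destruct b; [simpl|].
      * ring.
      * change (onemax (false :: x)) with (onemax x); replace (S (length x) - onemax x)%nat with (S (length x - onemax x)) by lia. simpl; ring.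
    + intros m Hm. apply bitstrings_length in Hm. pose proof (onemax_le m). simpl. destruct b; simpl; ring.
    + intros m Hm. apply bitstrings_length in Hm. pose proof (onemax_le m).
      change (onemax (false :: m)) with (onemax m); replace (S (length x) - onemax m)%nat with (S (length x - onemax m)) by lia. destruct b; simpl; ring.
Qed.
Lemma exp_pow_nat c k : exp c ^ k = exp (INR k * c).
Proof. induction k. simpl. rewrite Rmult_0_l, exp_0; ring.
  rewrite S_INR. change (exp c ^ S k) with (exp c * exp c ^ k). rewrite IHk, <- exp_plus. f_equal; ring. Qed.

Lemma bound_ak (T : R) (n k : nat) : 1 < T -> (0 < n)%nat -> (k <= n)%nat ->
  (1 - (1 - /T) / INR n) ^ k * (1 + (T - 1)/INR n) ^ (n - k)
  <= exp (-(1 - /T) * (INR k / INR n) + (T - 1) * (1 - INR k / INR n)).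
Proof.
  intros HT Hn Hk. assert (Hn' : 1 <= INR n) by (apply (le_INR 1); lia).
  assert (Hi : 0 < /T < 1). { split. apply Rinv_0_lt_compat; lra. rewrite <- Rinv_1; apply Rinv_lt_contravar; lra. }
  set (w := 1 - /T). assert (Hw : 0 < w < 1) by (unfold w; lra).
  assert (Hv : 0 < / INR n <= 1). { split. apply Rinv_0_lt_compat; lra. rewrite <- Rinv_1; apply Rinv_le_contravar; lra. }
  set (v := / INR n) in *.
  unfold Rdiv. fold v.
  apply Rle_trans with (exp (-(w * v)) ^ k * exp ((T-1) * v) ^ (n-k)).
  - apply Rmult_le_compat.
    + apply pow_le. nra.
    + apply pow_le. nra.
    + apply pow_incr. split. nra. pose proof (exp_ineq1_le (-(w*v))). lra.
    + apply pow_incr. split. nra. pose proof (exp_ineq1_le ((T-1)*v)). lra.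
  - rewrite !exp_pow_nat, <- exp_plus. right. f_equal. rewrite minus_INR by lia.
    assert (INR n * v = 1) by (unfold v; field; lra). nra.
Qed.

Lemma Rceil_spec x : x <= IZR (Rceil x) < x + 1.
Proof. unfold Rceil. destruct (archimed (- x)) as [H1 H2]. rewrite minus_IZR. simpl. lra. Qed.

Lemma f0_spec eps n : 0 < alpha eps < 1 ->
  exists F : nat, f0 eps n = Z.of_nat F /\ alpha eps * INR n <= INR F /\ (F <= n)%nat.
Proof.
  intros Ha. destruct (Rceil_spec (alpha eps * INR n)) as [H1 H2].
  pose proof (pos_INR n).
  assert (Hz : (0 <= f0 eps n)%Z). { apply le_IZR. unfold f0. nra. }
  exists (Z.to_nat (f0 eps n)). rewrite Z2Nat.id by exact Hz. split; [reflexivity|].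
  rewrite (INR_IZR_INZ (Z.to_nat _)), Z2Nat.id by exact Hz. split. unfold f0; lra.
  assert (IZR (f0 eps n) < IZR (Z.of_nat n) + 1). { rewrite <- INR_IZR_INZ. unfold f0. nra. }
  rewrite <- plus_IZR in H0. apply lt_IZR in H0. lia.
Qed.
Definition E0 eps := -(1 - /tau eps) * alpha eps + (tau eps - 1) * (1 - alpha eps).

Lemma eps_facts eps : 0 < eps < 1 ->
  1 < tau eps /\ 0 < alpha eps < 1 /\ exp (E0 eps) * ((1 - eps) * exp 1) <= 1 /\ exp (E0 eps) <= 1.
Proof.
  intros He. assert (He1 : 2 < exp 1) by (pose proof (exp_ineq1 1); lra).
  assert (Hu : / tau eps = eps / (4 * exp 1)). { unfold tau. field. lra. }
  assert (HT : 1 < tau eps). { unfold tau. apply (Rmult_lt_reg_r eps); [lra|]. unfold Rdiv. rewrite Rmult_assoc, Rinv_l by lra. lra. }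
  set (u := / tau eps) in *. set (T := tau eps) in *.
  assert (HuT : T * u = 1) by (unfold u; field; lra).
  assert (Hu0 : 0 < u) by (unfold u; apply Rinv_0_lt_compat; lra).
  assert (Hu1 : 2 * u <= eps / 2). { rewrite Hu. unfold Rdiv. rewrite Rinv_mult.
     assert (/ exp 1 < /2) by (apply Rinv_lt_contravar; lra). assert (0 < / exp 1) by (apply Rinv_0_lt_compat; lra). nra. }
  set (L := ln (1 + u)).
  assert (HL0 : 0 < L). { unfold L. rewrite <- ln_1. apply ln_increasing; lra. }
  assert (HL1 : L < u). { unfold L. rewrite <- (ln_exp u) at 2. apply ln_increasing. lra. apply exp_ineq1. lra. }
  assert (Ha : alpha eps = 1 - u * L) by reflexivity.
  assert (Hau : 0 < alpha eps < 1). { rewrite Ha. nra. }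
  assert (HE : E0 eps <= -1 + 2 * u).
  { unfold E0. fold T u. rewrite Ha. replace (1 - (1 - u*L)) with (u * L) by ring.
    replace ((T - 1) * (u * L)) with ((1 - u) * L) by (replace ((T - 1) * (u * L)) with ((T*u)*L - u*L) by ring; rewrite HuT; ring). nra. }
  assert (Hx : exp (E0 eps) <= exp (-1) * exp (2 * u)).
  { rewrite <- exp_plus. destruct HE as [HE|HE]; [left; apply exp_increasing; lra | rewrite HE; right; reflexivity]. }
  assert (Hm : exp (-1) * exp 1 = 1) by (rewrite <- exp_plus; replace (-1 + 1) with 0 by ring; apply exp_0).
  assert (H2u : exp (2 * u) * (1 - 2 * u) <= 1).
  { pose proof (exp_ineq1_le (- (2 * u))). assert (exp (2*u) * exp (-(2*u)) = 1) by (rewrite <- exp_plus; replace (2*u + -(2*u)) with 0 by ring; apply exp_0).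
    pose proof (exp_pos (2*u)). nra. }
  pose proof (exp_pos (2*u)). pose proof (exp_pos (-1)). pose proof (exp_pos (E0 eps)).
  repeat split; try lra.
  - apply Rle_trans with (exp (-1) * exp (2 * u) * ((1 - eps) * exp 1)).
    + apply Rmult_le_compat_r; [nra|exact Hx].
    + replace (exp (-1) * exp (2 * u) * ((1 - eps) * exp 1)) with (exp (2*u) * (1 - eps) * (exp (-1) * exp 1)) by ring; rewrite Hm. nra.
  - apply Rle_trans with (exp (-1) * exp (2 * u)); auto.
    rewrite <- exp_plus, <- exp_0. destruct (Rle_dec (-1 + 2*u) 0). 2: lra.
    destruct r. left; apply exp_increasing; auto. rewrite H2; right; reflexivity.
Qed.

Lemma exp_le_mono x y : x <= y -> exp x <= exp y.
Proof. intros [H|H]. left; apply exp_increasing; auto. rewrite H; right; reflexivity. Qed.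

Lemma ak_bound eps n k : 0 < eps < 1 -> (0 < n)%nat -> alpha eps * INR n <= INR k -> (k <= n)%nat ->
  (1 - (1 - / tau eps) / INR n) ^ k * (1 + (tau eps - 1)/INR n) ^ (n - k) <= exp (E0 eps).
Proof.
  intros He Hn Hk Hkn. destruct (eps_facts eps He) as [HT [Ha _]].
  eapply Rle_trans. apply bound_ak; auto. apply exp_le_mono.
  assert (Hn' : 0 < INR n) by (apply lt_0_INR; lia).
  assert (Hka : alpha eps <= INR k / INR n).
  { apply (Rmult_le_reg_r (INR n)); auto. unfold Rdiv. rewrite Rmult_assoc, Rinv_l by lra. lra. }
  assert (Hi : 0 < /tau eps < 1). { split. apply Rinv_0_lt_compat; lra. rewrite <- Rinv_1; apply Rinv_lt_contravar; lra. }
  set (kk := INR k / INR n) in *. unfold E0.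
  assert (0 <= (kk - alpha eps) * (tau eps - / tau eps)) by (apply Rmult_le_pos; lra).
  nra.
Qed.

Lemma g_eq eps n F x : f0 eps n = Z.of_nat F ->
  g eps n x = if Nat.leb F (onemax x) then tau eps ^ (onemax x - F) else 0.
Proof. intros H. unfold g. rewrite H. destruct (Nat.leb_spec F (onemax x)).
 - rewrite (proj2 (Z.leb_le _ _)) by lia. f_equal. lia.
 - rewrite (proj2 (Z.leb_gt _ _)) by lia. reflexivity.
Qed.

Lemma g_le eps n F y : 1 < tau eps -> f0 eps n = Z.of_nat F ->
  g eps n y <= tau eps ^ onemax y * / tau eps ^ F.
Proof. intros HT H. rewrite (g_eq _ _ _ _ H).
  assert (0 < tau eps ^ F) by (apply pow_lt; lra).
  destruct (Nat.leb_spec F (onemax y)).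
  - replace (onemax y) with ((onemax y - F) + F)%nat at 2 by lia. rewrite pow_add.
    rewrite Rmult_assoc, Rinv_r, Rmult_1_r by lra. lra.
  - apply Rmult_le_pos. apply pow_le; lra. left; apply Rinv_0_lt_compat; lra.
Qed.

Lemma parent_bound eps n x : 0 < eps < 1 -> (2 <= n)%nat -> length x = n ->
  sumR (map (fun m => mask_prob n m * g eps n (flip x m)) (bitstrings n)) <= exp (E0 eps) * g eps n x + 1.
Proof.
  intros He Hn Hx. destruct (eps_facts eps He) as [HT [Ha [Hb1 Hb2]]].
  destruct (f0_spec eps n Ha) as [F [HF [HFa HFn]]].
  assert (Hn' : 2 <= INR n) by (apply (le_INR 2); lia).
  set (T := tau eps) in *. set (p := / INR n). set (q := 1 - p).
  assert (Hp : 0 < p <= /2). { split. apply Rinv_0_lt_compat; lra. apply Rinv_le_contravar; lra. }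
  assert (HTF : 0 < T ^ F) by (apply pow_lt; lra).
  eapply Rle_trans.
  { apply (sumR_le _ (fun m => / T ^ F * (p ^ onemax m * q ^ (length x - onemax m) * T ^ onemax (flip x m)))).
    intros m _. unfold mask_prob. fold p q. rewrite Hx.
    assert (0 <= p ^ onemax m * q ^ (n - onemax m)) by (apply Rmult_le_pos; apply pow_le; unfold q; lra).
    eapply Rle_trans. apply Rmult_le_compat_l. exact H. apply (g_le eps n F); auto. fold T. right; ring. }
  rewrite sumR_scal. rewrite <- Hx at 1. rewrite prod_formula, Hx.
  set (k := onemax x). assert (Hk : (k <= n)%nat) by (unfold k; rewrite <- Hx; apply onemax_le).
  set (a := 1 - (1 - / T) / INR n). set (b := 1 + (T - 1) / INR n).
  assert (Hc : q * T + p = T * a) by (unfold q, p, a; field; lra).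
  assert (Hbb : q + p * T = b) by (unfold q, p, b; field; lra).
  rewrite Hc, Hbb, Rpow_mult_distr.
  assert (Hi : 0 < /T < 1). { split. apply Rinv_0_lt_compat; lra. rewrite <- Rinv_1; apply Rinv_lt_contravar; lra. }
  assert (Ha0 : 0 < a). { unfold a. unfold Rdiv. assert (/ INR n <= 1) by (fold p; lra). nra. }
  assert (Hb0 : 0 < b). { unfold b. unfold Rdiv. assert (0 < / INR n) by (fold p; lra). nra. }
  assert (HbTa : b <= T * a). { rewrite <- Hc, <- Hbb. unfold q. nra. }
  assert (Hg0 : 0 <= g eps n x) by (apply g_nonneg; lra).
  pose proof (exp_pos (E0 eps)).
  destruct (Nat.leb_spec F k) as [HFk|HFk].
  - assert (Hgx : g eps n x = T ^ (k - F)) by (rewrite (g_eq _ _ _ _ HF); fold k; rewrite (proj2 (Nat.leb_le _ _) HFk); reflexivity).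
    replace (T ^ k) with (T ^ (k - F) * T ^ F) by (rewrite <- pow_add; f_equal; lia).
    replace (/ T ^ F * (T ^ (k - F) * T ^ F * a ^ k * b ^ (n - k))) with (T ^ (k - F) * (a ^ k * b ^ (n - k)))
      by (field; lra).
    rewrite Hgx.
    assert (a ^ k * b ^ (n - k) <= exp (E0 eps)).
    { apply ak_bound; auto. lia. apply Rle_trans with (INR F); auto. apply le_INR; auto. }
    assert (0 < T ^ (k - F)) by (apply pow_lt; lra). nra.
  - assert (HaF : a ^ F * b ^ (n - F) <= exp (E0 eps)) by (apply ak_bound; auto; lia).
    assert (T ^ k * a ^ k * b ^ (n - k) <= T ^ F * (a ^ F * b ^ (n - F))).
    { replace (n - k)%nat with ((n - F) + (F - k))%nat by lia. rewrite pow_add.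
      replace (T ^ F * (a ^ F * b ^ (n - F))) with ((T * a) ^ k * ((T * a) ^ (F - k)) * b ^ (n - F))
        by (rewrite <- pow_add, Rpow_mult_distr; replace (k + (F - k))%nat with F by lia; ring).
      rewrite Rpow_mult_distr.
      assert (b ^ (F - k) <= (T * a) ^ (F - k)) by (apply pow_incr; lra).
      assert (0 <= T ^ k * a ^ k * b ^ (n - F)) by (apply Rmult_le_pos; [apply Rmult_le_pos|]; apply pow_le; lra).
      nra. }
    assert (/ T ^ F * (T ^ k * a ^ k * b ^ (n - k)) <= a ^ F * b ^ (n - F)).
    { apply (Rmult_le_reg_l (T ^ F)); auto. rewrite <- Rmult_assoc, Rinv_r, Rmult_1_l by lra. lra. }
    nra.
Qed.

Lemma sum_gpop eps n c beta P : sumR (map (fun x => c * (beta * g eps n x + 1)) P) = c * (beta * gpop eps n P + INR (length P)).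
Proof. induction P as [|a P IH]. unfold gpop; simpl; ring.
  rewrite map_cons. change (length (a :: P)) with (S (length P)). rewrite S_INR, gpop_cons.
  change (sumR (?x :: ?l)) with (x + sumR l). rewrite IH. ring. Qed.

Lemma mask_sum n : (0 < n)%nat -> sumR (map (mask_prob n) (bitstrings n)) = 1.
Proof. intros Hn. set (x := repeat false n).
  assert (Hx : length x = n) by apply repeat_length.
  pose proof (prod_formula (/ INR n) (1 - / INR n) 1 x) as H. rewrite Hx in H.
  rewrite !Rmult_1_r in H. replace (1 - / INR n + / INR n) with 1 in H by ring. rewrite !pow1, Rmult_1_l in H.
  rewrite <- H. f_equal. apply map_ext. intro m. unfold mask_prob. rewrite pow1. ring. Qed.

Theorem lemma3 :
  forall (eps : R), 0 < eps < 1 ->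
  forall (mu lam : nat), (0 < mu)%nat -> (0 < lam)%nat ->
  INR lam <= (1 - eps) * exp 1 * INR mu ->
  exists n0 : nat, forall n : nat, (n0 <= n)%nat ->
  forall P : list (list bool),
    length P = mu -> Forall (fun x => length x = n) P ->
    expect_iid (offspring_dist n P) lam (fun O => gpop eps n (select mu O))
      <= gpop eps n P + 2 * INR lam.
Proof.
  intros eps He mu lam Hmu Hlam Hle. exists 2%nat. intros n Hn P HP HPx.
  destruct (eps_facts eps He) as [HT [Ha [Hb1 Hb2]]].
  assert (Hmu' : 0 < INR mu) by (apply lt_0_INR; lia).
  assert (Hn' : 0 < INR n) by (apply lt_0_INR; lia).
  assert (Hmp : forall m, 0 <= mask_prob n m).
  { intro m. unfold mask_prob. assert (/ INR n <= 1) by (rewrite <- Rinv_1; apply Rinv_le_contravar; [lra|apply (le_INR 1); lia]).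
    assert (0 < / INR n) by (apply Rinv_0_lt_compat; lra).
    apply Rmult_le_pos; apply pow_le; lra. }
  set (d := offspring_dist n P).
  assert (Hd : Forall (fun wa => 0 <= fst wa) d).
  { apply Forall_forall. intros [w y] Hin. unfold d, offspring_dist in Hin. apply in_flat_map in Hin.
    destruct Hin as [x [_ Hin]]. apply in_map_iff in Hin. destruct Hin as [m [Heq _]]. inversion Heq. simpl.
    apply Rmult_le_pos; auto. left; apply Rinv_0_lt_compat; rewrite HP; lra. }
  assert (HW : Ed d (fun _ => 1) = 1).
  { unfold d, offspring_dist. rewrite Ed_flat_map.
    rewrite (map_ext _ (fun _ => / INR (length P))).
    - clear HPx. rewrite HP. assert (forall l : list (list bool), sumR (map (fun _ => / INR mu) l) = INR (length l) * / INR mu).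
      { induction l as [|a l IHl]. simpl; ring. rewrite map_cons. change (length (a :: l)) with (S (length l)). rewrite S_INR. change (sumR (?x :: ?r)) with (x + sumR r). rewrite IHl. ring. }
      rewrite H, HP. field. lra.
    - intro x. rewrite Ed_map. rewrite (map_ext _ (fun m => / INR (length P) * mask_prob n m)) by (intro; ring).
      rewrite sumR_scal, mask_sum by lia. ring. }
  eapply Rle_trans.
  { apply (expect_le d lam Hd _ (fun O => 0 + gpop eps n O)). intro l. pose proof (gpop_select eps n mu l (proj1 He)). lra. }
  rewrite expect_gpop by exact HW.
  assert (HE : Ed d (g eps n) <= / INR mu * (exp (E0 eps) * gpop eps n P + INR mu)).
  { unfold d, offspring_dist. rewrite Ed_flat_map. rewrite <- HP at 2. rewrite <- sum_gpop. rewrite HP.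
    apply sumR_le. intros x Hx. rewrite Forall_forall in HPx. specialize (HPx x Hx).
    rewrite Ed_map. rewrite (map_ext _ (fun m => / INR mu * (mask_prob n m * g eps n (flip x m)))) by (intro; ring).
    rewrite sumR_scal. apply Rmult_le_compat_l. left; apply Rinv_0_lt_compat; lra.
    apply parent_bound; auto. }
  pose proof (gpop_nonneg eps n P (proj1 He)) as HG.
  pose proof (exp_pos (E0 eps)) as Hb0.
  set (G := gpop eps n P) in *. set (beta := exp (E0 eps)) in *.
  assert (Hl0 : 0 < INR lam) by (apply lt_0_INR; lia).
  assert (Hlb : INR lam * beta <= INR mu).
  { apply Rle_trans with ((1 - eps) * exp 1 * INR mu * beta). apply Rmult_le_compat_r; lra. nra. }
  assert (INR lam * (/ INR mu * (beta * G + INR mu)) = (INR lam * beta / INR mu) * G + INR lam) by (field; lra).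
  assert (INR lam * beta / INR mu <= 1).
  { apply (Rmult_le_reg_r (INR mu)); auto. unfold Rdiv. rewrite Rmult_assoc, Rinv_l by lra. lra. }
  assert (INR lam * Ed d (g eps n) <= INR lam * (/ INR mu * (beta * G + INR mu))) by (apply Rmult_le_compat_l; lra).
  nra.
Qed.
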